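(* For every $\sigma\in\mathcal A$, every $\mathbf P_{\!\sigma}=(\mathbf p_{\sigma_d},\dots,\mathbf p_{\sigma_1})\in\mathcal P^\sigma$ and every $1\le n\le d-1$, the quantity $t_\sigma(\mathbf p_{\sigma_d};\dots;\mathbf p_{\sigma_{n+1}};\mathbf p^\ast_{\sigma_n};\dots;\mathbf p^\ast_{\sigma_1})$ equals $$T_n^\sigma+\sum_{k=n+1}^dC_k^{(d),\sigma}(\mathbf P_{\!\sigma})\Big(H(\mathbf p_{\sigma_k})+\int\varphi_k^\sigma\,\mathrm d\mathbf p_{\sigma_k}-\sum_{\ell=1}^n\chi_\ell^\sigma(\mathbf p_{\sigma_k})(T_\ell^\sigma-T_{\ell-1}^\sigma)\Big),$$ and moreover $t_\sigma(\mathbf p^\ast_{\sigma_d};\dots;\mathbf p^\ast_{\sigma_1})=T_d^\sigma$.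
   Context: Setup: $d\ge1$, $\mathcal I=\{1,\dots,N\}$, affine maps with diagonal linear parts $\mathrm{diag}(a_i^{(1)},\dots,a_i^{(d)})$, $\lambda_i^{(n)}=|a_i^{(n)}|\in(0,1)$, no two distinct maps agree on $[0,1]^d$. For a permutation $\sigma$, $\Pi_n^\sigma$ is orthogonal projection onto the span of coordinate axes $\sigma_1,\dots,\sigma_n$; $f_i,f_j$ overlap exactly if $\Pi_n^\sigma f_i=\Pi_n^\sigma f_j$ on $[0,1]^d$; $\mathcal I_n^\sigma$ = smallest elements of the classes of this equivalence relation. $\mathcal A$ = set of permutations $\sigma$ for which some $\mathbf i\in\mathcal I^{\mathbb N}$, $\delta>0$ have $L_\delta(\mathbf i,\sigma_d)\le\dots\le L_\delta(\mathbf i,\sigma_1)$ (ties broken by $\sigma_n>\sigma_{n-1}$), $L_\delta(\mathbf i,n)$ the unique integer with $\prod_{\ell\le L_\delta(\mathbf i,n)}\lambda_{i_\ell}^{(n)}\le\delta<\prod_{\ell\le L_\delta(\mathbf i,n)-1}\lambda_{i_\ell}^{(n)}$. $\mathcal P_n^\sigma$ = probability vectors on $\mathcal I_n^\sigma$; $\mathcal P^\sigma=\mathcal P_d^\sigma\times\dots\times\mathcal P_1^\sigma$. $\chi_n^\sigma(\mathbf p_{\sigma_m})=-\sum_{i\in\mathcal I_m^\sigma}p_{\sigma_m}(i)\log\lambda_i^{(\sigma_n)}$ ($n\le m$); $C_d^{(d),\sigma}=1/\chi_d^\sigma(\mathbf p_{\sigma_d})$, $C_n^{(d),\sigma}=(1-\sum_{m>n}C_m^{(d),\sigma}\chi_n^\sigma(\mathbf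 p_{\sigma_m}))/\chi_n^\sigma(\mathbf p_{\sigma_n})$ (note $C_k^{(d),\sigma}(\mathbf P_{\!\sigma})$ depends only on $\mathbf p_{\sigma_m}$, $m\ge k$). Potentials $\varphi_n^\sigma:\mathcal I_n^\sigma\to\mathbb R$, $\int\varphi_n^\sigma\mathrm d\mathbf p=\sum_ip(i)\varphi_n^\sigma(i)$; $t_\sigma(\mathbf P_{\!\sigma})=\sum_{n=1}^dC_n^{(d),\sigma}(\mathbf P_{\!\sigma})(H(\mathbf p_{\sigma_n})+\int\varphi_n^\sigma\mathrm d\mathbf p_{\sigma_n})$, $H$ Shannon entropy. $T_0^\sigma=0$; $T_n^\sigma$ is the unique solution of $\sum_{i\in\mathcal I_n^\sigma}p^\ast_{\sigma_n}(i)=1$ with $p^\ast_{\sigma_n}(i)=e^{\varphi_n^\sigma(i)}\prod_{\ell=1}^n(\lambda_i^{(\sigma_\ell)})^{T_\ell^\sigma-T_{\ell-1}^\sigma}$, $\mathbf p^\ast_{\sigma_n}=(p^\ast_{\sigma_n}(i))_i$. *)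

(* Defs.v *)
From HB Require Import structures.
From mathcomp Require Import all_boot all_order all_algebra all_fingroup.
From mathcomp Require Import all_classical all_reals all_analysis.
Set Implicit Arguments. Unset Strict Implicit. Unset Printing Implicit Defensive.
Import Order.TTheory GRing.Theory Num.Theory.
Local Open Scope ring_scope.

(* Conventions (0-based indexing):
   - the maps are indexed by i : 'I_N, coordinates by c : 'I_d;
     f_i(x)_c = a i c * x c + b i c  (diagonal affine maps);
   - for a permutation s : 'S_d, s k (k : 'I_d) is the paper's sigma_{k+1};
   - a "level" k : 'I_d stands for the paper's level k+1, so P k is
     p_{sigma_{k+1}}, a probability vector on I_{k+1}^sigma, phi k is
     phi_{k+1}^sigma, C P k is C_{k+1}^{(d),sigma}(P), etc.;
   - T : nat -> R with T 0 = T_0^sigma = 0 and T n = T_n^sigma. *)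

Section Defs.
Variables (R : realType) (d N : nat).
Variables (a b : 'I_N -> 'I_d -> R).

Definition affmap (i : 'I_N) (x : 'I_d -> R) : 'I_d -> R :=
  fun c => a i c * x c + b i c.

Definition in_cube (x : 'I_d -> R) : Prop := forall c, 0 <= x c <= 1.

Definition lam (i : 'I_N) (c : 'I_d) : R := `|a i c|.

Variable s : 'S_d.

Definition overlap (n : nat) (i j : 'I_N) : Prop :=
  forall x, in_cube x -> forall l : 'I_d, (l < n)%N -> affmap i x (s l) = affmap j x (s l).

(* I_n^s : smallest elements of the overlap classes *)
Definition inI (n : nat) (i : 'I_N) : bool :=
  `[< forall j, overlap n i j -> (i <= j)%N >].

Definition chi (l m : 'I_d) (q : 'I_N -> R) : R :=
  - \sum_(i < N | inI m.+1 i) q i * ln (lam i (s l)).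

Definition entropy (k : 'I_d) (q : 'I_N -> R) : R :=
  - \sum_(i < N | inI k.+1 i) q i * ln (q i).

Definition intphi (phi : 'I_d -> 'I_N -> R) (k : 'I_d) (q : 'I_N -> R) : R :=
  \sum_(i < N | inI k.+1 i) q i * phi k i.

Definition isProb (k : 'I_d) (q : 'I_N -> R) : Prop :=
  (forall i, inI k.+1 i -> 0 <= q i) /\ \sum_(i < N | inI k.+1 i) q i = 1.

(* C_{k+1} = (1 - sum_{m > k} C_{m+1} chi_{k+1}(P m)) / chi_{k+1}(P k),
   computed by fuel (fuel d is enough); for k = d-1 this is 1/chi_d(P_d). *)
Fixpoint Caux (P : 'I_d -> 'I_N -> R) (fuel : nat) (k : 'I_d) : R :=
  match fuel with
  | 0 => 0
  | f.+1 => (1 - \sum_(m < d | (k < m)%N) Caux P f m * chi k m (P m))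
              / chi k k (P k)
  end.

Definition Ccoef (P : 'I_d -> 'I_N -> R) (k : 'I_d) : R := Caux P d k.

Definition tsig (phi : 'I_d -> 'I_N -> R) (P : 'I_d -> 'I_N -> R) : R :=
  \sum_(k < d) Ccoef P k * (entropy k (P k) + intphi phi k (P k)).

Definition pstar (phi : 'I_d -> 'I_N -> R) (T : nat -> R) (k : 'I_d) (i : 'I_N) : R :=
  expR (phi k i) * \prod_(l < d | (l <= k)%N) (lam i (s l)) `^ (T l.+1 - T l).

Definition isL (w : nat -> 'I_N) (delta : R) (c : 'I_d) (L : nat) : Prop :=
  (0 < L)%N /\ \prod_(l < L) lam (w l) c <= delta
  /\ delta < \prod_(l < L.-1) lam (w l) c.

Definition inA : Prop :=
  exists (w : nat -> 'I_N) (delta : R), 0 < delta /\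
  exists L : 'I_d -> nat, (forall c, isL w delta c (L c)) /\
    forall k k' : 'I_d, k = k'.+1 :> nat ->
      (L (s k) < L (s k'))%N \/ (L (s k) = L (s k') /\ (s k' < s k)%N).

End Defs.

(* Main.v *)
Require Import Defs.
From HB Require Import structures.
From mathcomp Require Import all_boot all_order all_algebra all_fingroup.
From mathcomp Require Import all_classical all_reals all_analysis.
From mathcomp Require Import zify.
From Stdlib Require Import Lia.
From mathcomp Require Import ring.
Import Order.TTheory GRing.Theory Num.Theory.
Local Open Scope ring_scope.

Section Aux.
Variables (R : realType) (d N : nat) (a b : 'I_N -> 'I_d -> R) (s : 'S_d).

Lemma Caux_stable (Q : 'I_d -> 'I_N -> R) f : forall f' (k : 'I_d),
  (d - k <= f)%N -> (d - k <= f')%N -> Caux a b s Q f k = Caux a b s Q f' k.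
Proof.
elim: f => [|f IH] [|f'] k h1 h2.
- by [].
- by move: (ltn_ord k) h1; lia.
- by move: (ltn_ord k) h2; lia.
rewrite /=; congr (( 1 - _) / _); apply: eq_bigr => m km.
by rewrite (IH f') //; move: (ltn_ord m) km h1 h2; lia.
Qed.

Lemma Ccoef_rec (Q : 'I_d -> 'I_N -> R) (k : 'I_d) :
  Ccoef a b s Q k = (1 - \sum_(m < d | (k < m)%N) Ccoef a b s Q m * chi a b s k m (Q m))
     / chi a b s k k (Q k).
Proof.
rewrite /Ccoef (Caux_stable Q d (d - k.+1).+1 k) //; last first.
  by move: (ltn_ord k); lia. by rewrite leq_subr.
rewrite /=; congr ((1 - _) / _); apply: eq_bigr => m km.
by rewrite (Caux_stable Q _ d m) //; move: (ltn_ord m) km; lia.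
Qed.

Lemma Caux_dep (Q Q' : 'I_d -> 'I_N -> R) f : forall (k : 'I_d),
  (forall m : 'I_d, (k <= m)%N -> Q m = Q' m) -> Caux a b s Q f k = Caux a b s Q' f k.
Proof.
elim: f => [|f IH] k h //=.
rewrite h //; congr ((1 - _) / _); apply: eq_bigr => m km.
rewrite h; last by apply: ltnW.
rewrite (IH m) // => m' mm'; apply: h; move: km mm'; lia.
Qed.

Lemma Csum1 (Q : 'I_d -> 'I_N -> R) (l : 'I_d) :
  chi a b s l l (Q l) != 0 ->
  \sum_(m < d | (l <= m)%N) Ccoef a b s Q m * chi a b s l m (Q m) = 1.
Proof.
move=> hnz.
rewrite (bigD1 l) //= (Ccoef_rec Q l) mulfVK //.
rewrite (eq_bigl (fun m : 'I_d => (l < m)%N)); first by rewrite subrK.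
move=> m /=; rewrite -val_eqE /=; apply/idP/idP.
  by move/andP=> [h1 h2]; move: h1 h2; rewrite ltn_neqAle eq_sym => -> ->.
by move=> h; rewrite (ltnW h) /= neq_ltn h orbT.
Qed.


Lemma chi_neq0 (l m : 'I_d) (q : 'I_N -> R) :
  (forall i c, 0 < lam a i c < 1) ->
  (forall i, inI a b s m.+1 i -> 0 <= q i) ->
  \sum_(i < N | inI a b s m.+1 i) q i = 1 -> chi a b s l m q != 0.
Proof.
move=> hl hq hs; apply/eqP => h0.
have h1 : \sum_(i < N | inI a b s m.+1 i) q i * (- ln (lam a i (s l))) = chi a b s l m q.
  rewrite /chi -sumrN; apply: eq_bigr => i _; by rewrite mulrN.
rewrite h0 in h1.
have hpos : forall i, 0 < - ln (lam a i (s l)) by move=> i; rewrite oppr_gt0 ln_lt0.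
have : \sum_(i < N | inI a b s m.+1 i) q i = 0.
  apply: big1 => i hi.
  have hge : forall j, inI a b s m.+1 j -> 0 <= q j * - ln (lam a j (s l)).
    by move=> j hj; rewrite mulr_ge0 ?hq // ltW.
  have /eqP := psumr_eq0P hge h1 hi.
  by rewrite mulf_eq0 (gt_eqF (hpos i)) orbF => /eqP.
by rewrite hs => /eqP; rewrite oner_eq0.
Qed.

Variables (phi : 'I_d -> 'I_N -> R) (T : nat -> R).

Lemma pstar_expR (k : 'I_d) i : (forall c, 0 < lam a i c) ->
  pstar a s phi T k i = expR (phi k i + \sum_(l < d | (l <= k)%N) (T l.+1 - T l) * ln (lam a i (s l))).
Proof.
move=> hl; rewrite /pstar expRD; congr (_ * _).
rewrite (big_morph _ (@expRD R) (@expR0 R)); apply: eq_bigr => l _.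
by rewrite /powR gt_eqF.
Qed.

Lemma E_pstar (k : 'I_d) : (forall i c, 0 < lam a i c) ->
  entropy a b s k (pstar a s phi T k) + intphi a b s phi k (pstar a s phi T k)
  = \sum_(l < d | (l <= k)%N) (T l.+1 - T l) * chi a b s l k (pstar a s phi T k).
Proof.
move=> hl; rewrite /entropy /intphi /chi.
set p := pstar a s phi T k.
transitivity (- \sum_(i < N | inI a b s k.+1 i)
     p i * \sum_(l < d | (l <= k)%N) (T l.+1 - T l) * ln (lam a i (s l))).
  rewrite -[in RHS]sumrN -[in LHS]sumrN -big_split /=; apply: eq_bigr => i _.
  rewrite /p pstar_expR // expRK; ring.
transitivity (- \sum_(l < d | (l <= k)%N) \sum_(i < N | inI a b s k.+1 i)
     (T l.+1 - T l) * (p i * ln (lam a i (s l)))).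
  congr (- _); rewrite exchange_big /=; apply: eq_bigr => i _.
  rewrite mulr_sumr; apply: eq_bigr => l _; ring.
rewrite -sumrN; apply: eq_bigr => l _.
by rewrite -mulr_sumr mulrN.
Qed.

Lemma main_gen (P : 'I_d -> 'I_N -> R)
  (hlam : forall i c, 0 < lam a i c < 1)
  (hP : forall k, isProb a b s k (P k))
  (hT0 : T 0%N = 0)
  (hT : forall k : 'I_d,
     \sum_(i < N | inI a b s k.+1 i) pstar a s phi T k i = 1)
  (n : nat) (hn : (n <= d)%N) :
     tsig a b s phi (fun k => if (k < n)%N then pstar a s phi T k else P k)
     = T n + \sum_(k < d | (n <= k)%N)
               Ccoef a b s P k * (entropy a b s k (P k) + intphi a b s phi k (P k)
                 - \sum_(l < d | (l < n)%N) chi a b s l k (P k) * (T l.+1 - T l)).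
Proof.
set Q := (fun k : 'I_d => if (k < n)%N then pstar a s phi T k else P k).
have hlp : forall i c, 0 < lam a i c by move=> i c; case/andP: (hlam i c).
have hQnz : forall l, chi a b s l l (Q l) != 0.
  move=> l; rewrite /Q; case: ifP => _.
    apply: chi_neq0 => // i _; rewrite pstar_expR //; exact/ltW/expR_gt0.
  by case: (hP l) => h1 h2; apply: chi_neq0.
have hQP : forall k : 'I_d, (n <= k)%N -> Q k = P k.
  by move=> k hk; rewrite /Q ltnNge hk.
have hCQ : forall k : 'I_d, (n <= k)%N -> Ccoef a b s Q k = Ccoef a b s P k.
  move=> k hk; apply: Caux_dep => m hm; apply: hQP; exact: leq_trans hk hm.
set G := fun (l k : 'I_d) => (T l.+1 - T l) * (Ccoef a b s Q k * chi a b s l k (Q k)).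
have X : T n = \sum_(k < d | (k < n)%N) \sum_(l < d | (l <= k)%N) G l k
             + \sum_(k < d | (n <= k)%N) \sum_(l < d | (l < n)%N) G l k.
  have -> : T n = \sum_(l < d | (l < n)%N) (T l.+1 - T l).
    rewrite -(big_ord_widen d (fun l => T l.+1 - T l) hn) -(big_mkord xpredT (fun l => T l.+1 - T l)).
    by rewrite telescope_sumr // hT0 subr0.
  transitivity (\sum_(l < d | (l < n)%N) \sum_(k < d | (l <= k)%N) G l k).
    apply: eq_bigr => l _; rewrite -[LHS]mulr1 -(Csum1 Q l (hQnz l)) mulr_sumr.
    by [].
  transitivity (\sum_(l < d | (l < n)%N) (\sum_(k < d | ((l <= k) && (k < n))%N) G l k
                   + \sum_(k < d | (n <= k)%N) G l k)).
    apply: eq_bigr => l hl; rewrite (bigID (fun k : 'I_d => (k < n)%N)) /=.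
    congr (_ + _); apply: eq_bigl => k.
    by case: (leqP n k) => h; rewrite ?andbF ?andbT // (leq_trans (ltnW hl) h).
  rewrite big_split /=; congr (_ + _); last by rewrite exchange_big.
  rewrite (exchange_big_dep (fun k : 'I_d => (k < n)%N)) /=; last first.
    by move=> l k _ /andP[].
  apply: eq_bigr => k hk; apply: eq_bigl => l.
  by case: (leqP l k) => h; rewrite ?andbF //= (leq_ltn_trans h hk) hk.
rewrite /tsig (bigID (fun k : 'I_d => (k < n)%N)) /= X.
have S1 : \sum_(k < d | (k < n)%N) Ccoef a b s Q k *
            (entropy a b s k (Q k) + intphi a b s phi k (Q k))
          = \sum_(k < d | (k < n)%N) \sum_(l < d | (l <= k)%N) G l k.
  apply: eq_bigr => k hk.
  have Qk : Q k = pstar a s phi T k by rewrite /Q hk.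
  rewrite Qk E_pstar // mulr_sumr; apply: eq_bigr => l _; rewrite /G -Qk; ring.
have S2 : \sum_(k < d | ~~ (k < n)%N) Ccoef a b s Q k *
            (entropy a b s k (Q k) + intphi a b s phi k (Q k))
          = \sum_(k < d | (n <= k)%N) Ccoef a b s P k *
            (entropy a b s k (P k) + intphi a b s phi k (P k)).
  rewrite (eq_bigl (fun k : 'I_d => (n <= k)%N)); last by move=> k; rewrite -leqNgt.
  by apply: eq_bigr => k hk; rewrite hCQ // hQP.
have S3 : \sum_(k < d | (n <= k)%N)
               Ccoef a b s P k * (entropy a b s k (P k) + intphi a b s phi k (P k)
                 - \sum_(l < d | (l < n)%N) chi a b s l k (P k) * (T l.+1 - T l))
        = \sum_(k < d | (n <= k)%N) Ccoef a b s P k *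
            (entropy a b s k (P k) + intphi a b s phi k (P k))
          - \sum_(k < d | (n <= k)%N) \sum_(l < d | (l < n)%N) G l k.
  rewrite -sumrB; apply: eq_bigr => k hk; rewrite mulrBr mulr_sumr.
  congr (_ - _); apply: eq_bigr => l _; rewrite /G hCQ // hQP //; ring.
rewrite S1 S2 S3; ring.
Qed.

End Aux.

Theorem lemma5p2 (R : realType) (d N : nat) (hd : (1 <= d)%N)
  (a b : 'I_N -> 'I_d -> R)
  (hlam : forall i c, 0 < lam a i c < 1)
  (hdist : forall i j : 'I_N, i <> j ->
     exists x, in_cube x /\ affmap a b i x <> affmap a b j x)
  (s : 'S_d) (hA : inA a s)
  (phi : 'I_d -> 'I_N -> R)
  (P : 'I_d -> 'I_N -> R) (hP : forall k, isProb a b s k (P k))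
  (T : nat -> R) (hT0 : T 0%N = 0)
  (hT : forall k : 'I_d,
     \sum_(i < N | inI a b s k.+1 i) pstar a s phi T k i = 1) :
  (forall n : nat, (1 <= n)%N -> (n <= d.-1)%N ->
     tsig a b s phi (fun k => if (k < n)%N then pstar a s phi T k else P k)
     = T n + \sum_(k < d | (n <= k)%N)
               Ccoef a b s P k * (entropy a b s k (P k) + intphi a b s phi k (P k)
                 - \sum_(l < d | (l < n)%N) chi a b s l k (P k) * (T l.+1 - T l)))
  /\ tsig a b s phi (pstar a s phi T) = T d.
Proof.
split.
  move=> n _ h2; apply: main_gen => //; exact: leq_trans h2 (leq_pred d).
have := @main_gen R d N a b s phi T P hlam hP hT0 hT d (leqnn d).
have -> : (fun k : 'I_d => if (k < d)%N then pstar a s phi T k else P k)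
          = pstar a s phi T by apply: funext => k; rewrite ltn_ord.
move=> ->; rewrite big1 ?addr0 // => k hk.
by move: (ltn_ord k); rewrite ltnNge hk.
Qed.
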